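(* With the notation of the context, let $f(g)$ be the number of $k$-tuples of nonnegative integers $[g_1,\dots,g_k]$ with $\sum_i g_i=g$ and $g_i\le\alpha_i g$ for all $i$. Then, as formal power series, \[ F(x)=\sum_{g=0}^\infty f(g)x^g=\frac{\sum_{\mathbf{a}\in\mathcal{A}}x^{b(\mathbf{a})}}{\prod_{i=1}^k\left(1-x^{N/n_i}\right)}. \]
   Context: Let $k\ge 2$ and let $\alpha_1,\dots,\alpha_k$ be nonnegative rational numbers such that the sum of any $k-1$ of them is at most $1$ and $\sum_i\alpha_i>1$. Write $\alpha_i=m_i/n_i$ in lowest terms with $n_i\ge 1$. Set $N=\prod_{i=1}^k n_i$, $A=N(\sum_{i=1}^k\alpha_i-1)$ (a positive integer), and $\hat\alpha_i=1-\sum_{j\ne i}\alpha_j$. Let $\mathcal{A}$ be the set of integer $k$-tuples $\mathbf{a}=(a_1,\dots,a_k)$ with $0\le a_i<A$ for all $i$ such that for every $1\le j\le k$ the integer $N\hat\alpha_j\frac{a_j}{n_j}+N\alpha_j\sum_{i\ne j}\frac{a_i}{n_i}$ is divisible by $A$. For $\mathbf{a}\in\mathcal{A}$ put $b(\mathbf{a})=\frac{N}{A}\sum_{i=1}^k\frac{a_i}{n_i}$ (a nonnegative integer). *)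

(* Defs.v *)
From HB Require Import structures.
From mathcomp Require Import all_boot all_order all_algebra.
Set Implicit Arguments. Unset Strict Implicit. Unset Printing Implicit Defensive.
Import Order.TTheory GRing.Theory Num.Theory.
Local Open Scope ring_scope.

Section Defs.
Variables (k : nat) (alpha : 'I_k -> rat).

Definition nq (i : 'I_k) : rat := (denq (alpha i))%:~R.
Definition nn (i : 'I_k) : nat := absz (denq (alpha i)).

Definition Nn : nat := (\prod_(i < k) nn i)%N.
Definition Nq : rat := Nn%:R.

(* A = N (sum alpha_i - 1), as a rational and as a nat (it is a positive integer) *)
Definition Aq : rat := Nq * (\sum_(i < k) alpha i - 1).
Definition An : nat := absz (numq Aq).

Definition alpha_hat (j : 'I_k) : rat := 1 - \sum_(i < k | i != j) alpha i.

Definition cond_expr (a : {ffun 'I_k -> 'I_An}) (j : 'I_k) : rat :=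
  Nq * alpha_hat j * ((a j)%:R / nq j)
  + Nq * alpha j * (\sum_(i < k | i != j) (a i)%:R / nq i).

Definition Aset : {set {ffun 'I_k -> 'I_An}} :=
  [set a | [forall j, (cond_expr a j / Aq) \is a Num.int]].

(* b(a) = (N/A) sum a_i / n_i, a nonnegative integer *)
Definition bexp (a : {ffun 'I_k -> 'I_An}) : nat :=
  absz (numq (Nq / Aq * \sum_(i < k) (a i)%:R / nq i)).

(* f(g) = #{ (g_1..g_k) in N^k : sum g_i = g, g_i <= alpha_i g } ;
   each g_i <= g, so it suffices to range over 'I_(g+1)^k *)
Definition fcount (g : nat) : nat :=
  #|[set t : {ffun 'I_k -> 'I_g.+1} |
      ((\sum_(i < k) (t i : nat))%N == g)
      && [forall i, ((t i : nat)%:R : rat) <= alpha i * g%:R]]|.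

Definition denom_poly : {poly int} := \prod_(i < k) (1 - 'X^(Nn %/ nn i)).
Definition numer_poly : {poly int} := \sum_(a in Aset) 'X^(bexp a).

End Defs.

(* Main.v *)
Require Import Defs.
From HB Require Import structures.
From mathcomp Require Import all_boot all_order all_algebra.
From mathcomp Require Import zify ring lra.
Import Order.TTheory GRing.Theory Num.Theory.
Local Open Scope ring_scope.

Lemma toNatE (x : rat) : x \is a Num.int -> 0 <= x -> ((absz (numq x))%:R : rat) = x.
Proof.
move=> xi x0; rewrite -[RHS](numqK xi).
have h : (0 <= numq x) by rewrite numq_ge0.
by rewrite -[in RHS](gez0_abs h).
Qed.

Lemma card_bij (T U : finType) (P : pred T) (Q : pred U) (f : T -> U) (h : U -> T) :
  (forall x, P x -> Q (f x)) -> (forall y, Q y -> P (h y)) ->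
  (forall x, P x -> h (f x) = x) -> (forall y, Q y -> f (h y) = y) ->
  #|[set x | P x]| = #|[set y | Q y]|.
Proof.
move=> PQ QP hf fh.
rewrite -(card_in_imset (f := f) (D := [set x | P x])); last first.
  by move=> x1 x2; rewrite !inE => P1 P2 e; rewrite -(hf _ P1) -(hf _ P2) e.
apply: eq_card => y; rewrite inE; apply/imsetP/idP.
  by case=> x; rewrite inE => Px ->; apply: PQ.
by move=> Qy; exists (h y); rewrite ?inE ?fh //; apply: QP.
Qed.

Lemma alt_sum (I : finType) (T : {set I}) :
  \sum_(S : {set I}) ((S \subset T)%:R * (-1)^+#|S| : int) = (T == set0)%:R.
Proof.
have h := @bigA_distr int 0 1 *%R +%R I (fun i => if i \in T then -1 else 0) (fun _ => 1).
simpl in h.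
transitivity (\sum_(J : {set I}) \prod_(i : I) (if i \in J then (if i \in T then -1 else 0) else 1) : int).
  apply: eq_bigr => S _; rewrite -big_mkcond /=.
  case: (boolP (S \subset T)) => sT.
    rewrite mul1r -prodr_const; apply: eq_bigr => i iS.
    by rewrite (subsetP sT i iS).
  case/subsetPn: sT => i iS iT.
  by rewrite mul0r (bigD1 i) //= (negbTE iT) mul0r.
rewrite -h.
case: (set_0Vmem T) => [->|[t tT]].
  by rewrite eqxx big1 // => i _; rewrite inE add0r.
have -> : (T == set0) = false by apply/negbTE/set0Pn; exists t.
by rewrite (bigD1 t) //= tT addNr mul0r.
Qed.

Lemma card_setE (T : finType) (Q : pred T) : (#|[set x | Q x]|%:R : int) = \sum_x (Q x)%:R.
Proof.
rewrite -sum1_card natr_sum big_mkcond /=; apply: eq_bigr => x _.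
by rewrite inE; case: (Q x).
Qed.

Lemma sum_ind (F : nat -> int) (c : int) (d g : nat) :
  \sum_(j < g.+1) F j * (c * (d == j)%:R) = c * (if (d <= g)%N then F d else 0).
Proof.
case: leqP => h.
  rewrite (bigD1 (Ordinal (h : (d < g.+1)%N))) //= eqxx mulr1 big1; first by rewrite addr0 mulrC.
  move=> j /eqP ne; have : (d == j) = false.
    by apply/negbTE; apply/eqP => e; apply: ne; apply: ord_inj.
  by move=> ->; rewrite !mulr0.
rewrite mulr0 big1 // => j _; have : (d == j) = false.
  by apply/negbTE; rewrite neq_ltn (leq_trans (ltn_ord j) h) orbT.
by move=> ->; rewrite !mulr0.
Qed.

Section Main.
Variables (k : nat) (alpha : 'I_k -> rat).
Hypotheses (hk : (2 <= k)%N) (hnn : forall i, 0 <= alpha i)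
  (hsub : forall j : 'I_k, \sum_(i < k | i != j) alpha i <= 1)
  (hsum : 1 < \sum_(i < k) alpha i).

Local Notation nn := (nn alpha).
Local Notation nq := (nq alpha).
Local Notation Nn := (Nn alpha).
Local Notation Nq := (Nq alpha).
Local Notation Aq := (Aq alpha).
Local Notation An := (An alpha).
Local Notation ah := (alpha_hat alpha).
Local Notation sg := (\sum_(i < k) alpha i).

Lemma nn_gt0 i : (0 < nn i)%N.
Proof. by rewrite /Defs.nn absz_gt0 denq_neq0. Qed.

Lemma nqE i : nq i = (nn i)%:R.
Proof.
rewrite /Defs.nq /Defs.nn -[LHS]/((denq (alpha i))%:~R : rat).
by rewrite -{1}(gez0_abs (ltW (denq_gt0 (alpha i)))).
Qed.

Lemma nq_gt0 i : 0 < nq i.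
Proof. by rewrite nqE ltr0n nn_gt0. Qed.

Lemma nq_neq0 i : nq i != 0.
Proof. by rewrite gt_eqF ?nq_gt0. Qed.

Definition dd (l : 'I_k) : nat := (\prod_(j < k | j != l) nn j)%N.

Lemma NnE l : Nn = (nn l * dd l)%N.
Proof. by rewrite /Defs.Nn (bigD1 l). Qed.

Lemma dd_gt0 l : (0 < dd l)%N.
Proof. by apply: prodn_gt0 => j; apply: nn_gt0. Qed.

Lemma Nn_gt0 : (0 < Nn)%N.
Proof. by apply: prodn_gt0 => j; apply: nn_gt0. Qed.

Lemma NqE l : Nq = nq l * (dd l)%:R.
Proof. by rewrite /Defs.Nq (NnE l) natrM nqE. Qed.

Lemma Nq_gt0 : 0 < Nq.
Proof. by rewrite /Defs.Nq ltr0n Nn_gt0. Qed.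

Lemma dd_div l : (Nn %/ nn l)%N = dd l.
Proof. by rewrite (NnE l) mulKn // nn_gt0. Qed.

Lemma nn_le_Nn l : (nn l <= Nn)%N.
Proof. by rewrite (NnE l) leq_pmulr // dd_gt0. Qed.

Lemma anum i : alpha i * nq i = (numq (alpha i))%:~R.
Proof. by rewrite numqE. Qed.

Lemma int_ad i l : i != l -> alpha i * (dd l)%:R \is a Num.int.
Proof.
move=> il; rewrite /dd (bigD1 i) //= natrM mulrA -nqE anum.
by rewrite rpredM ?intr_int ?natr_int.
Qed.

Lemma ahE j : ah j = 1 - sg + alpha j.
Proof. by rewrite /alpha_hat [in RHS](bigD1 j) //=; ring. Qed.

Lemma ah_ge0 j : 0 <= ah j.
Proof. by rewrite /alpha_hat subr_ge0. Qed.

Lemma int_hat l : ah l * (dd l)%:R \is a Num.int.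
Proof.
rewrite /alpha_hat mulrBl mul1r mulr_suml rpredB ?natr_int //.
by apply: rpred_sum => i il; apply: int_ad.
Qed.

Lemma AqE : Aq = Nq * (sg - 1).
Proof. by []. Qed.

Lemma Aq_gt0 : 0 < Aq.
Proof. by rewrite AqE mulr_gt0 ?Nq_gt0 // subr_gt0. Qed.

Lemma Nqa_int i : Nq * alpha i \is a Num.int.
Proof.
by rewrite (NqE i) mulrC mulrA anum rpredM ?intr_int ?natr_int.
Qed.

Lemma Aq_int : Aq \is a Num.int.
Proof.
rewrite AqE mulrBr mulr1 rpredB ?natr_int // mulr_sumr rpred_sum // => i _.
exact: Nqa_int.
Qed.

Lemma Nq_neq0 : Nq != 0.
Proof. by rewrite gt_eqF ?Nq_gt0. Qed.

Lemma AnE : Aq = An%:R.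
Proof. by rewrite /Defs.An toNatE ?Aq_int ?ltW ?Aq_gt0. Qed.

Lemma An_gt0 : (0 < An)%N.
Proof. by rewrite -(ltr0n rat) -AnE Aq_gt0. Qed.

Lemma Aq_neq0 : Aq != 0.
Proof. by rewrite gt_eqF ?Aq_gt0. Qed.



Ltac fside := repeat (apply/andP; split); rewrite ?Aq_neq0 ?Nq_neq0 //; try exact: nq_neq0.

Definition Yf (x : 'I_k -> rat) := \sum_(i < k) x i / nq i.
Definition Phi (x : 'I_k -> rat) j := Nq * ah j * (x j / nq j)
  + Nq * alpha j * (\sum_(i < k | i != j) x i / nq i).
Definition beta x := Nq / Aq * Yf x.

Lemma PhiE x j : Phi x j = Nq * alpha j * Yf x - Aq * (x j / nq j).
Proof. by rewrite /Phi /Yf [in RHS](bigD1 j) //= ahE AqE; ring. Qed.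

Lemma Phi_sum x : \sum_j Phi x j = Nq * Yf x.
Proof.
under eq_bigr => j _ do rewrite PhiE.
rewrite sumrB -mulr_suml -mulr_sumr.
rewrite -mulr_sumr -/(Yf x) AqE; ring.
Qed.

Lemma tq_sum x : \sum_j Phi x j / Aq = beta x.
Proof. by rewrite -mulr_suml Phi_sum /beta; field; rewrite Aq_neq0. Qed.

Lemma PhiD x z j : Phi (fun i => x i + z i) j = Phi x j + Phi z j.
Proof.
rewrite !PhiE /Yf.
rewrite (eq_bigr (fun i => x i / nq i + z i / nq i)); last by move=> i _; rewrite mulrDl.
by rewrite big_split /=; ring.
Qed.

Lemma Yf_ge0 x : (forall i, 0 <= x i) -> 0 <= Yf x.
Proof. by move=> h; apply: sumr_ge0 => i _; rewrite divr_ge0 // ltW ?nq_gt0. Qed.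

Lemma Phi_ge0 x j : (forall i, 0 <= x i) -> 0 <= Phi x j.
Proof.
move=> h; have hN := ltW Nq_gt0.
have hd : forall i, 0 <= x i / nq i by move=> i; rewrite divr_ge0 // ltW ?nq_gt0.
rewrite /Phi addr_ge0 //; apply: mulr_ge0 => //; try (apply: mulr_ge0 => //; exact: ah_ge0).
by apply: sumr_ge0 => i _.
Qed.

Lemma beta_ge0 x : (forall i, 0 <= x i) -> 0 <= beta x.
Proof.
by move=> h; rewrite /beta mulr_ge0 ?Yf_ge0 // divr_ge0 // ltW ?Nq_gt0 ?Aq_gt0.
Qed.

Lemma bound x j : (forall i, 0 <= x i) -> x j <= Aq * beta x.
Proof.
move=> h; have -> : Aq * beta x = Nq * Yf x.
  by rewrite /beta; field; rewrite Aq_neq0.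
have -> : x j = nq j * (x j / nq j) by field; rewrite nq_neq0.
have h1 : x j / nq j <= Yf x.
  rewrite /Yf (bigD1 j) //= lerDl; apply: sumr_ge0 => i _.
  by rewrite divr_ge0 // ltW ?nq_gt0.
apply: (le_trans (ler_wpM2l (ltW (nq_gt0 j)) h1)).
apply: ler_wpM2r; first exact: Yf_ge0.
by rewrite nqE /Defs.Nq ler_nat nn_le_Nn.
Qed.

Definition cq (G : rat) (x : 'I_k -> rat) j := nq j * (alpha j * G - x j).

Lemma Yf_cq G x : Yf (cq G x) = sg * G - \sum_i x i.
Proof.
rewrite /Yf /cq (eq_bigr (fun i => alpha i * G - x i)).
  by rewrite sumrB mulr_suml.
by move=> i _; field; rewrite nq_neq0.
Qed.

Lemma A1 G x j : \sum_i x i = G -> Phi (cq G x) j / Aq = x j.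
Proof.
move=> hs; rewrite PhiE Yf_cq hs /cq.
have h : sg - 1 != 0 by rewrite gt_eqF // subr_gt0.
rewrite AqE; field; rewrite ?nq_neq0 ?h ?Nq_neq0 //.
Qed.

Lemma A3 G x : \sum_i x i = G -> beta (cq G x) = G.
Proof.
move=> hs; rewrite /beta Yf_cq hs AqE.
have h : sg - 1 != 0 by rewrite gt_eqF // subr_gt0.
by field; rewrite h Nq_neq0.
Qed.

Lemma A2 x j : cq (beta x) (fun i => Phi x i / Aq) j = x j.
Proof.
rewrite /cq PhiE /beta; field; rewrite ?nq_neq0 ?Aq_neq0 //.
Qed.

Lemma A5 x j : 0 <= x j -> Phi x j / Aq <= alpha j * beta x.
Proof.
move=> h; rewrite PhiE /beta -subr_ge0.
have -> : alpha j * (Nq / Aq * Yf x) - (Nq * alpha j * Yf x - Aq * (x j / nq j)) / Aq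
   = x j / nq j by field; fside.
by rewrite divr_ge0 // ltW ?nq_gt0.
Qed.

Definition zS (S : {set 'I_k}) (j : 'I_k) : rat := (j \in S)%:R * Aq.
Definition dS (S : {set 'I_k}) : nat := (\sum_(i in S) dd i)%N.

Lemma Phi_zS S j : Phi (zS S) j / Aq =
  (j \in S)%:R * (ah j * (dd j)%:R)
  + \sum_(i < k | i != j) (i \in S)%:R * (alpha j * (dd i)%:R).
Proof.
rewrite /Phi mulrDl mulr_sumr mulr_suml; congr (_ + _).
  rewrite /zS (NqE j); field; rewrite Aq_neq0 nq_neq0 //.
apply: eq_bigr => i _; rewrite /zS (NqE i); field; rewrite Aq_neq0 nq_neq0 //.
Qed.

Lemma Phi_zS_int S j : Phi (zS S) j / Aq \is a Num.int.
Proof.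
rewrite Phi_zS; apply: rpredD; first by apply: rpredM; [exact: natr_int | exact: int_hat].
apply: rpred_sum => i ij; apply: rpredM; first exact: natr_int.
by apply: int_ad; rewrite eq_sym.
Qed.

Lemma beta_zS x S : beta (fun i => x i + zS S i) = beta x + (dS S)%:R.
Proof.
rewrite /beta /Yf.
under eq_bigr => i _ do rewrite mulrDl.
rewrite big_split /= mulrDr; congr (_ + _).
rewrite /dS natr_sum [RHS]big_mkcond /= mulr_sumr; apply: eq_bigr => i _.
rewrite /zS; case: (i \in S); last by rewrite !mul0r mulr0.
by rewrite (NqE i) mul1r; field; fside.
Qed.

Lemma Phi_ext x z j : (forall i, x i = z i) -> Phi x j = Phi z j.
Proof. by move=> h; rewrite !PhiE /Yf (eq_bigr (fun i => z i / nq i)) ?h // => i _; rewrite h. Qed.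

Lemma beta_ext x z : (forall i, x i = z i) -> beta x = beta z.
Proof. by move=> h; rewrite /beta /Yf (eq_bigr (fun i => z i / nq i)) // => i _; rewrite h. Qed.

Definition condb (x : 'I_k -> rat) : bool := [forall j, (Phi x j / Aq) \is a Num.int].

Lemma condb_ext x z : (forall i, x i = z i) -> condb x = condb z.
Proof.
by move=> h; apply: eq_forallb => j; rewrite (Phi_ext _ _ _ h).
Qed.

Lemma condb_shift x S : condb (fun i => x i + zS S i) = condb x.
Proof.
apply: eq_forallb => j; rewrite PhiD mulrDl rpredDr //; exact: Phi_zS_int.
Qed.

Lemma beta_int x : condb x -> beta x \is a Num.int.
Proof. by move/forallP=> h; rewrite -tq_sum rpred_sum. Qed.

Definition cv {m} (c : {ffun 'I_k -> 'I_m}) : 'I_k -> rat := fun i => (c i : nat)%:R.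

Lemma cv_ge0 m (c : {ffun 'I_k -> 'I_m}) i : 0 <= cv c i.
Proof. by rewrite /cv ler0n. Qed.

Lemma toNat_le (x : rat) (m : nat) : x \is a Num.int -> 0 <= x -> x <= m%:R -> (absz (numq x) <= m)%N.
Proof. by move=> xi x0 xm; rewrite -(ler_nat rat) toNatE. Qed.

Definition Kb g := (An * g.+1)%N.
Definition Eset g G := [set c : {ffun 'I_k -> 'I_(Kb g).+1} | condb (cv c) && (beta (cv c) == G%:R)].

Lemma AqG_le g G : (G <= g)%N -> Aq * G%:R <= (Kb g)%:R.
Proof.
move=> Gg; rewrite AnE -natrM ler_nat /Kb leq_mul2l (leqW Gg) orbT //.
Qed.

Lemma step1 g G : (G <= g)%N -> fcount alpha G = #|Eset g G|.
Proof.
move=> Gg; rewrite /fcount /Eset.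
pose f1 (t : {ffun 'I_k -> 'I_G.+1}) : {ffun 'I_k -> 'I_(Kb g).+1} :=
  [ffun j => inord (absz (numq (cq G%:R (cv t) j)))].
pose h1 (c : {ffun 'I_k -> 'I_(Kb g).+1}) : {ffun 'I_k -> 'I_G.+1} :=
  [ffun j => inord (absz (numq (Phi (cv c) j / Aq)))].
set P := fun t : {ffun 'I_k -> 'I_G.+1} => ((\sum_(i < k) (t i : nat))%N == G)
      && [forall i, ((t i : nat)%:R : rat) <= alpha i * G%:R].
have sumP : forall t, P t -> \sum_i cv t i = G%:R.
  by move=> t /andP[/eqP e _]; rewrite -[in RHS]e /cv natr_sum.
have cq_ge0 : forall t, P t -> forall j, 0 <= cq G%:R (cv t) j.
  move=> t /andP[_ /forallP h] j; apply: mulr_ge0; first exact: ltW (nq_gt0 j).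
  by rewrite subr_ge0; apply: h.
have cq_int : forall (t : {ffun 'I_k -> 'I_G.+1}) (j : 'I_k), cq G%:R (cv t) j \is a Num.int.
  move=> t j; rewrite /cq mulrBr mulrA (mulrC (nq j)) anum nqE.
  by apply: rpredB; apply: rpredM; rewrite ?intr_int ?natr_int.
have key1 : forall t, P t -> forall j, cv (f1 t) j = cq G%:R (cv t) j.
  move=> t Pt j; rewrite /cv ffunE inordK ?toNatE ?cq_int ?cq_ge0 //.
  rewrite ltnS toNat_le ?cq_int ?cq_ge0 //.
  apply: (le_trans (bound _ _ (cq_ge0 t Pt))).
  by rewrite A3 ?sumP // AqG_le.
have key2 : forall c : {ffun 'I_k -> 'I_(Kb g).+1},
    condb (cv c) && (beta (cv c) == G%:R) -> forall j, cv (h1 c) j = Phi (cv c) j / Aq.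
  move=> c /andP[/forallP ci /eqP cb] j.
  have ge0 : 0 <= Phi (cv c) j / Aq by rewrite divr_ge0 ?Phi_ge0 ?ltW ?Aq_gt0 //; exact: cv_ge0.
  rewrite /cv ffunE inordK ?toNatE ?ci // ltnS toNat_le ?ci //.
  rewrite -cb -tq_sum (bigD1 j) //= lerDl; apply: sumr_ge0 => i _.
  by rewrite divr_ge0 ?Phi_ge0 ?ltW ?Aq_gt0 //; exact: cv_ge0.
apply: (@card_bij _ _ _ _ f1 h1).
- move=> t Pt; apply/andP; split.
    apply/forallP => j; rewrite (Phi_ext _ _ _ (key1 t Pt)) A1 ?sumP //.
    by rewrite /cv natr_int.
  by rewrite (beta_ext _ _ (key1 t Pt)) A3 ?sumP.
- move=> c Qc; apply/andP; split.
    rewrite -(eqr_nat rat) natr_sum.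
    have -> : \sum_(i < k) ((h1 c i : nat)%:R : rat) = \sum_i cv (h1 c) i by [].
    by rewrite (eq_bigr _ (fun i _ => key2 c Qc i)) tq_sum; case/andP: Qc.
  apply/forallP => i; have := key2 c Qc i; rewrite /cv => ->.
  case/andP: Qc => _ /eqP <-; apply: A5; exact: cv_ge0.
- move=> t Pt; apply/ffunP => j; apply/val_inj.
  rewrite ffunE /= (Phi_ext _ _ _ (key1 t Pt)) A1 ?sumP //.
  have -> : `|numq (cv t j)|%N = t j.
    by apply/eqP; rewrite -(eqr_nat rat) toNatE /cv ?natr_int ?ler0n.
  exact: inordK (ltn_ord (t j)).
- move=> c Qc; apply/ffunP => j; rewrite ffunE.
  have e : cq G%:R (cv (h1 c)) j = cv c j.
    have hb : beta (cv c) = G%:R by case/andP: Qc => _ /eqP.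
    by rewrite /cq (key2 c Qc j) -hb; exact: (A2 (cv c) j).
  rewrite e.
  have -> : `|numq (cv c j)|%N = c j.
    by apply/eqP; rewrite -(eqr_nat rat) toNatE /cv ?natr_int ?ler0n.
  exact: inord_val.
Qed.

Definition Ys g (S : {set 'I_k}) := [set c : {ffun 'I_k -> 'I_(Kb g).+1} |
  condb (cv c) && (beta (cv c) == g%:R) && [forall j in S, (An <= c j)%N]].

Definition f2 g (S : {set 'I_k}) (c : {ffun 'I_k -> 'I_(Kb g).+1}) : {ffun 'I_k -> 'I_(Kb g).+1} :=
  [ffun j => inord (c j + (j \in S) * An)].
Definition h2 g (S : {set 'I_k}) (c : {ffun 'I_k -> 'I_(Kb g).+1}) : {ffun 'I_k -> 'I_(Kb g).+1} :=
  [ffun j => inord (c j - (j \in S) * An)].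

Lemma zS_nat S j : zS S j = ((j \in S) * An)%:R.
Proof. by rewrite /zS AnE natrM. Qed.

Lemma h2_val g (S : {set 'I_k}) (c : {ffun 'I_k -> 'I_(Kb g).+1}) j : ((h2 g S c j) : nat) = (c j - (j \in S) * An)%N.
Proof. by rewrite ffunE inordK // ltnS (leq_trans (leq_subr _ _)) // -ltnS ltn_ord. Qed.

Lemma h2_cv g (S : {set 'I_k}) (c : {ffun 'I_k -> 'I_(Kb g).+1}) : [forall j in S, (An <= c j)%N] ->
  forall j, cv (h2 g S c) j + zS S j = cv c j.
Proof.
move=> /forall_inP h j; rewrite /cv h2_val zS_nat -natrD subnK //.
by case: (boolP (j \in S)) => js; rewrite ?mul1n ?mul0n ?h.
Qed.

Lemma step2 g S : (if (dS S <= g)%N then #|Eset g (g - dS S)| else 0%N) = #|Ys g S|.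
Proof.
case: leqP => hd; last first.
  apply/esym/eqP; rewrite cards_eq0; apply/eqP/setP => c; rewrite inE [RHS]inE.
  apply/negbTE; apply/negP => /andP[/andP[_ /eqP hb] hS].
  have hx := h2_cv _ _ _ hS.
  rewrite -(beta_ext _ _ hx) beta_zS in hb.
  have : 0 <= beta (cv (h2 g S c)) by apply: beta_ge0 => i; exact: cv_ge0.
  have -> : beta (cv (h2 g S c)) = g%:R - (dS S)%:R by rewrite -hb; ring.
  by rewrite subr_ge0 ler_nat leqNgt hd.
have f2_cv : forall c : {ffun 'I_k -> 'I_(Kb g).+1},
    condb (cv c) && (beta (cv c) == (g - dS S)%:R) ->
    forall j, cv (f2 g S c) j = cv c j + zS S j.
  move=> c /andP[_ /eqP hb] j.
  have hb' : beta (fun i => cv c i + zS S i) = g%:R by rewrite beta_zS hb -natrD subnK.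
  have le : cv c j + zS S j <= (Kb g)%:R.
    have x0 : forall i, 0 <= cv c i + zS S i.
      by move=> i; rewrite addr_ge0 ?cv_ge0 // zS_nat ler0n.
    apply: (le_trans (bound (fun i => cv c i + zS S i) j x0)).
    by rewrite hb' AqG_le.
  move: le; rewrite /cv zS_nat -natrD ler_nat => le.
  by rewrite ffunE inordK.
rewrite /Eset /Ys; apply: (@card_bij _ _ _ _ (f2 g S) (h2 g S)).
- move=> c Qc; have e := f2_cv c Qc; case/andP: Qc => cc /eqP cb.
  apply/andP; split; [apply/andP; split|].
  + by rewrite (condb_ext _ _ e) condb_shift.
  + by rewrite (beta_ext _ _ e) beta_zS cb -natrD subnK.
  + apply/forall_inP => j js; move: (e j); rewrite /cv zS_nat js mul1n -natrD.
    by move/eqP; rewrite eqr_nat => /eqP ->; rewrite leq_addl.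
- move=> c /andP[/andP[cc /eqP cb] hS]; have e := h2_cv _ _ _ hS.
  apply/andP; split.
    by rewrite -(condb_shift _ S) (condb_ext _ _ e).
  rewrite natrB // -cb -(beta_ext _ _ e) beta_zS; apply/eqP; ring.
- move=> c Qc; apply/ffunP => j; apply: ord_inj.
  rewrite h2_val; have := f2_cv c Qc j.
  rewrite /cv zS_nat -natrD => /eqP; rewrite eqr_nat => /eqP ->.
  by rewrite addnK.
- move=> c /andP[/andP[cc /eqP cb] hS]; apply/ffunP => j; apply: ord_inj.
  rewrite ffunE inordK h2_val ?subnK //.
  all: first [by case: (boolP (j \in S)) => js; rewrite ?mul1n ?mul0n //; move/forall_inP: hS; apply
             | by rewrite h2_val ltnS (leq_trans (leq_subr _ _)) // -ltnS ltn_ord ].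
Qed.

Lemma Aset_cond (a : {ffun 'I_k -> 'I_An}) : (a \in Aset alpha) = condb (cv a).
Proof. by rewrite inE. Qed.

Lemma bexp_eq (a : {ffun 'I_k -> 'I_An}) g : condb (cv a) ->
  (bexp a == g) = (beta (cv a) == g%:R).
Proof.
move=> h; rewrite -(eqr_nat rat).
have -> : bexp a = `|numq (beta (cv a))|%N by [].
by rewrite toNatE ?beta_int // beta_ge0 // => i; exact: cv_ge0.
Qed.

Lemma step3 g :
  #|[set c : {ffun 'I_k -> 'I_(Kb g).+1} |
     condb (cv c) && (beta (cv c) == g%:R) && [forall j, (c j < An)%N]]|
  = #|[set a in Aset alpha | bexp a == g]|.
Proof.
pose f3 (c : {ffun 'I_k -> 'I_(Kb g).+1}) : {ffun 'I_k -> 'I_An} :=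
  [ffun j => Ordinal (ltn_pmod (c j) An_gt0)].
pose h3 (a : {ffun 'I_k -> 'I_An}) : {ffun 'I_k -> 'I_(Kb g).+1} :=
  [ffun j => inord (a j)].
have h3v : forall a j, (h3 a j : nat) = a j.
  move=> a j; rewrite ffunE inordK // ltnS ltnW // (leq_trans (ltn_ord (a j))) //.
  by rewrite /Kb leq_pmulr.
have h3cv : forall a j, cv (h3 a) j = cv a j by move=> a j; rewrite /cv h3v.
have f3v : forall (c : {ffun 'I_k -> 'I_(Kb g).+1}) j, (c j < An)%N -> (f3 c j : nat) = c j.
  by move=> c j h; rewrite ffunE /= modn_small.
apply: (@card_bij _ _ _ _ f3 h3).
- move=> c /andP[/andP[cc cb] /forallP cl].
  have e : forall j, cv (f3 c) j = cv c j by move=> j; rewrite /cv f3v.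
  rewrite Aset_cond (condb_ext _ _ e) cc /= bexp_eq ?(condb_ext _ _ e) //.
  by rewrite (beta_ext _ _ e).
- move=> a /andP[]; rewrite Aset_cond => ca; rewrite bexp_eq // => ba.
  rewrite (condb_ext _ _ (h3cv a)) ca (beta_ext _ _ (h3cv a)) ba /=.
  by apply/forallP => j; rewrite h3v ltn_ord.
- move=> c /andP[_ /forallP cl]; apply/ffunP => j; apply: ord_inj.
  by rewrite h3v f3v.
- move=> a _; apply/ffunP => j; apply: ord_inj.
  by rewrite f3v h3v // ltn_ord.
Qed.

Lemma denom_coef j : (denom_poly alpha)`_j = \sum_(S : {set 'I_k}) (-1)^+#|S| * ((dS S == j)%:R : int).
Proof.
have h := @bigA_distr {poly int} 0 1 *%R +%R 'I_k (fun i => - 'X^(Nn %/ nn i)) (fun _ => 1).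
simpl in h.
rewrite /denom_poly (eq_bigr (fun i => - 'X^(Nn %/ nn i) + 1)); last by move=> i _; rewrite addrC.
rewrite h coef_sum; apply: eq_bigr => S _; rewrite -big_mkcond /= prodrN.
rewrite (eq_bigr (fun i => 'X^(dd i))); last by move=> i _; rewrite dd_div.
rewrite prodrXr -/(dS S) -[in LHS]signr_odd -[in RHS]signr_odd !mulr_sign.
by case: (odd #|S|); rewrite ?coefN coefXn eq_sym.
Qed.
Lemma mainS g : \sum_(j < g.+1) ((fcount alpha (g - j))%:R * (denom_poly alpha)`_j)
  = (numer_poly alpha)`_g.
Proof.
under eq_bigr => j _ do rewrite denom_coef mulr_sumr.
rewrite exchange_big /=.
transitivity (\sum_(S : {set 'I_k}) (-1)^+#|S| * (#|Ys g S|%:R : int)).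
  apply: eq_bigr => S _; rewrite (sum_ind (fun j => (fcount alpha (g - j))%:R)).
  congr (_ * _); rewrite -step2; case: ifP => h //.
  by rewrite (step1 g) ?leq_subr.
pose P (c : {ffun 'I_k -> 'I_(Kb g).+1}) := condb (cv c) && (beta (cv c) == g%:R).
pose T (c : {ffun 'I_k -> 'I_(Kb g).+1}) := [set j | (An <= c j)%N].
transitivity (\sum_(S : {set 'I_k}) \sum_c (-1)^+#|S| * ((P c)%:R * (S \subset T c)%:R) : int).
  apply: eq_bigr => S _; rewrite /Ys card_setE mulr_sumr; apply: eq_bigr => c _.
  rewrite -natrM mulnb; congr (_ * (_ && _)%:R).
  apply/forall_inP/subsetP => h j js; first by rewrite inE h.
  by have := h j js; rewrite inE.
rewrite exchange_big /=.
transitivity (\sum_c ((P c && [forall j, (c j < An)%N])%:R : int)).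
  apply: eq_bigr => c _.
  transitivity ((P c)%:R * \sum_(S : {set 'I_k}) ((S \subset T c)%:R * (-1)^+#|S|) : int).
    rewrite mulr_sumr; apply: eq_bigr => S _; rewrite mulrCA; congr (_ * _); exact: mulrC.
  rewrite alt_sum -natrM mulnb; congr ((_ && _)%:R).
  apply/eqP/forallP => [h j | h].
    rewrite ltnNge; apply/negP => hj.
    have : j \in T c by rewrite inE.
    by rewrite h inE.
  by apply/setP => j; rewrite inE [RHS]inE leqNgt h.
rewrite -card_setE step3 card_setE /numer_poly coef_sum [RHS]big_mkcond /=.
apply: eq_bigr => a _; rewrite coefXn eq_sym.
by case: (a \in Aset alpha).
Qed.
End Main.

Theorem mainTheorem8 (k : nat) (alpha : 'I_k -> rat)
  (hk : (2 <= k)%N)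
  (hnn : forall i, 0 <= alpha i)
  (hsub : forall j : 'I_k, \sum_(i < k | i != j) alpha i <= 1)
  (hsum : 1 < \sum_(i < k) alpha i) :
  forall g : nat,
    \sum_(j < g.+1) ((fcount alpha (g - j))%:R * (denom_poly alpha)`_j)
    = (numer_poly alpha)`_g.
Proof.
move=> g; exact: mainS.
Qed.
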